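(* Let $f$ be as in the standing setting. For $x\in X$ let $x^+=[x-\frac{1}{L_f}\nabla f(x)]_X$ and $\bar x^+=[x^+]_{X^*}$. Suppose there is a constant $\beta$ with $0<\beta<1$ such that $$\|x^+-\bar x^+\|\le\beta\|x-\bar x\|\qquad\forall x\in X.$$ Then $f$ satisfies the quadratic functional growth condition $f(x)-f^*\ge\frac{\kappa_f}{2}\|x-\bar x\|^2$ for all $x\in X$ with $\kappa_f=L_f(1-\beta)^2$.
   Context: Standing setting: $X\subseteq\mathbb{R}^n$ is a nonempty closed convex set; $f:X\to\mathbb{R}$ is convex and continuously differentiable, with $L_f$-Lipschitz continuous gradient on $X$ ($L_f>0$). Consider $f^*=\min_{x\in X}f(x)$ with optimal set $X^*$ nonempty and closed and $f^*$ finite. $\|\cdot\|$ is the Euclidean norm, $[u]_S$ is the Euclidean projection onto a closed convex set $S$, and $\bar x=[x]_{X^*}$. *)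

(* Defs.v *)
(* Euclidean space R^n modelled as functions nat -> R whose
   coordinates at indices >= n vanish. *)
From Stdlib Require Import Reals.
Open Scope R_scope.

Definition vec := nat -> R.

Definition inRn (n : nat) (x : vec) : Prop := forall i, (n <= i)%nat -> x i = 0.

Definition vadd (x y : vec) : vec := fun i => x i + y i.
Definition vsub (x y : vec) : vec := fun i => x i - y i.
Definition vscal (a : R) (x : vec) : vec := fun i => a * x i.

Fixpoint sumR (k : nat) (h : nat -> R) : R :=
  match k with O => 0 | S k' => sumR k' h + h k' end.

Definition inner (n : nat) (x y : vec) : R := sumR n (fun i => x i * y i).
Definition norm (n : nat) (x : vec) : R := sqrt (inner n x x).

Definition subset_Rn (n : nat) (S : vec -> Prop) : Prop := forall x, S x -> inRn n x.

Definition closed_in_Rn (n : nat) (S : vec -> Prop) : Prop :=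
  forall x, inRn n x ->
    (forall eps, eps > 0 -> exists y, S y /\ norm n (vsub x y) < eps) -> S x.

Definition convex_in_Rn (S : vec -> Prop) : Prop :=
  forall x y t, S x -> S y -> 0 <= t <= 1 ->
    S (vadd (vscal t x) (vscal (1 - t) y)).

Definition convex_on (S : vec -> Prop) (f : vec -> R) : Prop :=
  forall x y t, S x -> S y -> 0 <= t <= 1 ->
    f (vadd (vscal t x) (vscal (1 - t) y)) <= t * f x + (1 - t) * f y.

Definition is_gradient_on (n : nat) (S : vec -> Prop) (f : vec -> R) (g : vec -> vec) : Prop :=
  forall x, S x -> inRn n (g x) /\
    forall eps, eps > 0 -> exists delta, delta > 0 /\
      forall y, S y -> norm n (vsub y x) < delta ->
        Rabs (f y - f x - inner n (g x) (vsub y x)) <= eps * norm n (vsub y x).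

Definition lipschitz_on (n : nat) (S : vec -> Prop) (g : vec -> vec) (L : R) : Prop :=
  forall x y, S x -> S y -> norm n (vsub (g x) (g y)) <= L * norm n (vsub x y).

Definition is_proj (n : nat) (S : vec -> Prop) (u p : vec) : Prop :=
  S p /\ forall y, S y -> norm n (vsub u p) <= norm n (vsub u y).

Definition optset (X : vec -> Prop) (f : vec -> R) (fstar : R) : vec -> Prop :=
  fun x => X x /\ f x = fstar.

(* Main.v *)
From Coquelicot Require Import Coquelicot.
From Stdlib Require Import Reals Lra Psatz Lia FunctionalExtensionality ClassicalEpsilon Classical ZArith.
Require Import Defs.
Open Scope R_scope.

Lemma sumR_nonneg k h : (forall i, 0 <= h i) -> 0 <= sumR k h.
Proof. intros H; induction k; simpl; [lra| specialize (H k); lra]. Qed.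

Lemma N_ge0 n x : 0 <= inner n x x.
Proof. unfold inner; apply sumR_nonneg; intros; nra. Qed.

Lemma norm_ge0 n x : 0 <= norm n x.
Proof. apply sqrt_pos. Qed.

Lemma norm_sq n x : norm n x ^ 2 = inner n x x.
Proof. unfold norm; rewrite pow2_sqrt; auto using N_ge0. Qed.

Lemma inner_sym n x y : inner n x y = inner n y x.
Proof. unfold inner; induction n; simpl; [ring| rewrite IHn; ring]. Qed.

Lemma inner_sub_sub n x y : inner n (vsub x y) (vsub x y) = inner n x x - 2 * inner n x y + inner n y y.
Proof. unfold inner, vsub; induction n; simpl; [ring| rewrite IHn; ring]. Qed.

Lemma inner_add_add n x y : inner n (vadd x y) (vadd x y) = inner n x x + 2 * inner n x y + inner n y y.
Proof. unfold inner, vadd; induction n; simpl; [ring| rewrite IHn; ring]. Qed.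

Lemma inner_scal_l n a x y : inner n (vscal a x) y = a * inner n x y.
Proof. unfold inner, vscal; induction n; simpl; [ring| rewrite IHn; ring]. Qed.

Lemma inner_scal_r n a x y : inner n x (vscal a y) = a * inner n x y.
Proof. unfold inner, vscal; induction n; simpl; [ring| rewrite IHn; ring]. Qed.

Lemma inner_sub_l n x y z : inner n (vsub x y) z = inner n x z - inner n y z.
Proof. unfold inner, vsub; induction n; simpl; [ring| rewrite IHn; ring]. Qed.

Lemma inner_sub_r n x y z : inner n z (vsub x y) = inner n z x - inner n z y.
Proof. unfold inner, vsub; induction n; simpl; [ring| rewrite IHn; ring]. Qed.

Lemma CS_sq n x y : inner n x y ^ 2 <= inner n x x * inner n y y.
Proof.
  assert (Hq : forall t, 0 <= inner n x x + 2 * t * inner n x y + t * t * inner n y y).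
  { intro t. pose proof (N_ge0 n (vadd x (vscal t y))) as H.
    rewrite inner_add_add, inner_scal_r, inner_scal_l, inner_scal_r in H. lra. }
  pose proof (N_ge0 n x). pose proof (N_ge0 n y).
  destruct (Req_dec (inner n y y) 0) as [E|E].
  - destruct (Req_dec (inner n x y) 0) as [E2|E2].
    + rewrite E2, E; nra.
    + specialize (Hq (- (inner n x x + 1) / (2 * inner n x y))).
      rewrite E in Hq.
      replace (2 * (- (inner n x x + 1) / (2 * inner n x y)) * inner n x y) with (- (inner n x x + 1)) in Hq by (field; auto).
      lra.
  - specialize (Hq (- inner n x y / inner n y y)).
    assert (0 < inner n y y) by lra.
    set (a := inner n x y) in *. set (b := inner n y y) in *.
    replace (inner n x x + 2 * (- a / b) * a + - a / b * (- a / b) * b) with (inner n x x - a*a/b) in Hq by (field; lra).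
    assert (a * a / b <= inner n x x) by lra.
    apply Rmult_le_compat_r with (r := b) in H2; [|lra].
    replace (a*a/b*b) with (a*a) in H2 by (field; lra). nra.
Qed.

Lemma CS n x y : inner n x y <= norm n x * norm n y.
Proof.
  pose proof (CS_sq n x y). pose proof (norm_ge0 n x). pose proof (norm_ge0 n y).
  rewrite <- !norm_sq in H.
  destruct (Rle_dec (inner n x y) 0); [nra|].
  apply Rsqr_incr_0_var; unfold Rsqr; [|nra]. nra.
Qed.

Lemma norm_tri n x y : norm n (vadd x y) <= norm n x + norm n y.
Proof.
  pose proof (CS n x y). pose proof (norm_ge0 n x). pose proof (norm_ge0 n y).
  pose proof (norm_ge0 n (vadd x y)).
  apply Rsqr_incr_0_var; unfold Rsqr; [|nra].
  pose proof (norm_sq n (vadd x y)). pose proof (norm_sq n x). pose proof (norm_sq n y).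
  rewrite inner_add_add in H3. nra.
Qed.

Lemma norm_tri3 n a b c : norm n (vsub a c) <= norm n (vsub a b) + norm n (vsub b c).
Proof.
  replace (vsub a c) with (vadd (vsub a b) (vsub b c)).
  apply norm_tri. apply functional_extensionality; intro i; unfold vadd, vsub; ring.
Qed.

Lemma norm_sym n a b : norm n (vsub a b) = norm n (vsub b a).
Proof. unfold norm; f_equal; rewrite !inner_sub_sub, (inner_sym n a b); ring. Qed.

Lemma norm_scal n a x : norm n (vscal a x) = Rabs a * norm n x.
Proof.
  unfold norm. rewrite inner_scal_l, inner_scal_r, <- Rmult_assoc, sqrt_mult.
  - f_equal. apply sqrt_Rsqr_abs.
  - nra.
  - apply N_ge0.
Qed.

Lemma norm_le_sq n x y : norm n x <= norm n y -> inner n x x <= inner n y y.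
Proof. intros H. rewrite <- !norm_sq. pose proof (norm_ge0 n x). nra. Qed.
Lemma proj_vi n X u p y : convex_in_Rn X -> is_proj n X u p -> X y ->
  inner n (vsub u p) (vsub y p) <= 0.
Proof.
  intros hc [Hp Hmin] Hy.
  set (a := vsub u p). set (b := vsub y p).
  assert (Ht : forall t, 0 < t <= 1 -> 2 * inner n a b <= t * inner n b b).
  { intros t Ht.
    assert (Hz := hc y p t Hy Hp ltac:(lra)).
    specialize (Hmin _ Hz). apply norm_le_sq in Hmin.
    replace (vsub u (vadd (vscal t y) (vscal (1 - t) p))) with (vsub a (vscal t b)) in Hmin
      by (apply functional_extensionality; intro i; unfold a, b, vsub, vadd, vscal; ring).
    fold a in Hmin. rewrite (inner_sub_sub n a (vscal t b)), !inner_scal_r, inner_scal_l in Hmin. nra. }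
  pose proof (N_ge0 n b).
  destruct (Rle_dec (inner n a b) 0) as [|Hn]; [auto|].
  destruct (Rle_dec (inner n b b) (inner n a b)).
  - specialize (Ht 1 ltac:(lra)). lra.
  - specialize (Ht (inner n a b / inner n b b)).
    assert (0 < inner n b b) by lra.
    assert (inner n a b / inner n b b * inner n b b = inner n a b) by (field; lra).
    assert (inner n a b / inner n b b <= 1).
    { apply Rmult_le_reg_r with (inner n b b); [lra|]. rewrite H1. lra. }
    assert (0 < inner n a b / inner n b b) by (apply Rdiv_lt_0_compat; lra).
    specialize (Ht ltac:(lra)). lra.
Qed.

Lemma cont_eps F t : (forall eps, eps > 0 -> exists del, del > 0 /\
   forall s, Rabs (s - t) < del -> Rabs (F s - F t) < eps) -> continuity_pt F t.
Proof.
  intros Hy eps He. destruct (Hy eps He) as [d [Hd H]]. exists d; split; auto.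
  intros s [_ Hs]. simpl in *. unfold R_dist in *. apply H; auto.
Qed.

Definition cl (t : R) := Rmax 0 (Rmin 1 t).
Lemma cl_in t : 0 <= cl t <= 1.
Proof. unfold cl, Rmax, Rmin; repeat destruct Rle_dec; lra. Qed.
Lemma cl_id t : 0 <= t <= 1 -> cl t = t.
Proof. unfold cl, Rmax, Rmin; repeat destruct Rle_dec; lra. Qed.
Lemma cl_lip s t : Rabs (cl s - cl t) <= Rabs (s - t).
Proof. unfold cl, Rmax, Rmin; repeat destruct Rle_dec; unfold Rabs; repeat destruct Rcase_abs; lra. Qed.

Section Desc.
Variables (n : nat) (X : vec -> Prop) (f : vec -> R) (g : vec -> vec) (L : R) (x y : vec).
Hypotheses (hc : convex_in_Rn X) (hg : is_gradient_on n X f g) (hL : 0 <= L)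
  (hLip : lipschitz_on n X g L) (hx : X x) (hy : X y).

Let d := vsub y x.
Let z t := vadd (vscal t y) (vscal (1-t) x).
Let H t := f (z (cl t)).

Lemma Xz t : 0 <= t <= 1 -> X (z t).
Proof. intros; apply hc; auto. Qed.

Lemma zdiff s t : vsub (z s) (z t) = vscal (s - t) d.
Proof. apply functional_extensionality; intro i; unfold z, d, vsub, vadd, vscal; ring. Qed.
Lemma zx s : vsub (z s) x = vscal s d.
Proof. apply functional_extensionality; intro i; unfold z, d, vsub, vadd, vscal; ring. Qed.
Lemma z0 : z 0 = x.
Proof. apply functional_extensionality; intro i; unfold z, d, vsub, vadd, vscal; ring. Qed.
Lemma z1 : z 1 = y.
Proof. apply functional_extensionality; intro i; unfold z, d, vsub, vadd, vscal; ring. Qed.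

Lemma H_cont t : 0 <= t <= 1 -> continuity_pt H t.
Proof.
  intros Ht. apply cont_eps. intros eps He.
  assert (Hzt : X (z (cl t))) by (apply Xz, cl_in).
  destruct (hg _ Hzt) as [_ Hd]. destruct (Hd 1 ltac:(lra)) as [del [Hdel Hh]].
  set (K := Rabs (inner n (g (z (cl t))) d) + norm n d + 1).
  pose proof (norm_ge0 n d). pose proof (Rabs_pos (inner n (g (z (cl t))) d)).
  assert (HK : 0 < K) by (unfold K; lra).
  exists (Rmin (del / K) (eps / K)). split.
  { apply Rmin_glb_lt; apply Rdiv_lt_0_compat; lra. }
  intros s Hs. pose proof (cl_lip s t).
  assert (Hm1 := Rmin_l (del / K) (eps / K)). assert (Hm2 := Rmin_r (del / K) (eps / K)).
  set (c := Rabs (cl s - cl t)) in *.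
  assert (Hc : c * K < del /\ c * K < eps).
  { split; [apply Rmult_lt_reg_r with (/K) | apply Rmult_lt_reg_r with (/K)];
    try (apply Rinv_0_lt_compat; lra);
    replace (c * K * / K) with c by (field; lra); unfold Rdiv in *; lra. }
  assert (Hn : norm n (vsub (z (cl s)) (z (cl t))) = c * norm n d).
  { rewrite zdiff, norm_scal; reflexivity. }
  assert (Hc0 : 0 <= c) by apply Rabs_pos.
  specialize (Hh (z (cl s)) (Xz _ (cl_in s))).
  rewrite Hn in Hh. specialize (Hh ltac:(unfold K in Hc; nra)).
  rewrite zdiff, inner_scal_r in Hh.
  unfold H.
  assert (Rabs ((cl s - cl t) * inner n (g (z (cl t))) d) = c * Rabs (inner n (g (z (cl t))) d))
    by (unfold c; apply Rabs_mult).
  assert (Rabs (f (z (cl s)) - f (z (cl t))) <=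
     Rabs (f (z (cl s)) - f (z (cl t)) - (cl s - cl t) * inner n (g (z (cl t))) d)
     + Rabs ((cl s - cl t) * inner n (g (z (cl t))) d)).
  { eapply Rle_trans; [|apply Rabs_triang]. right; f_equal; ring. }
  unfold K in Hc. nra.
Qed.

Lemma H_der t : 0 < t < 1 -> derivable_pt_lim H t (inner n (g (z t)) d).
Proof.
  intros Ht eps He.
  assert (Hzt : X (z t)) by (apply Xz; lra).
  pose proof (norm_ge0 n d).
  destruct (hg _ Hzt) as [_ Hd]. destruct (Hd (eps / (norm n d + 1))) as [del [Hdel Hh]].
  { apply Rdiv_lt_0_compat; lra. }
  assert (Hp : 0 < Rmin (del / (norm n d + 1)) (Rmin t (1 - t))).
  { apply Rmin_glb_lt; [apply Rdiv_lt_0_compat; lra|apply Rmin_glb_lt; lra]. }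
  exists (mkposreal _ Hp). intros h Hh0 Hha. simpl in Hha.
  assert (Hm1 := Rmin_l (del / (norm n d + 1)) (Rmin t (1 - t))).
  assert (Hm2 := Rmin_r (del / (norm n d + 1)) (Rmin t (1 - t))).
  assert (Hm3 := Rmin_l t (1 - t)). assert (Hm4 := Rmin_r t (1 - t)).
  assert (Hab : - Rabs h <= h <= Rabs h) by (unfold Rabs; destruct Rcase_abs; lra).
  unfold H. rewrite (cl_id (t + h)) by lra. rewrite (cl_id t) by lra.
  assert (Hhp : 0 < Rabs h) by (apply Rabs_pos_lt; auto).
  assert (Hlt : Rabs h * norm n d < del).
  { assert (Rabs h * (norm n d + 1) < del).
    { apply Rmult_lt_reg_r with (/ (norm n d + 1)); [apply Rinv_0_lt_compat; lra|].
      replace (Rabs h * (norm n d + 1) * / (norm n d + 1)) with (Rabs h) by (field; lra).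
      unfold Rdiv in *; lra. }
    nra. }
  assert (Hth : 0 <= t + h <= 1) by lra.
  specialize (Hh (z (t + h)) (Xz _ Hth)).
  rewrite zdiff, norm_scal, inner_scal_r in Hh.
  replace (t + h - t) with h in Hh by ring.
  specialize (Hh Hlt).
  replace ((f (z (t + h)) - f (z t)) / h - inner n (g (z t)) d) with
    ((f (z (t + h)) - f (z t) - h * inner n (g (z t)) d) / h) by (field; auto).
  unfold Rdiv. rewrite Rabs_mult, Rabs_inv.
  apply Rmult_lt_reg_r with (Rabs h); [auto|].
  rewrite Rmult_assoc, Rinv_l by lra. rewrite Rmult_1_r.
  eapply Rle_lt_trans; [apply Hh|].
  assert (eps / (norm n d + 1) * norm n d < eps).
  { apply Rmult_lt_reg_r with (norm n d + 1); [lra|].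
    replace (eps / (norm n d + 1) * norm n d * (norm n d + 1)) with (eps * norm n d) by (field; lra).
    nra. }
  nra.
Qed.

Lemma descent : f y <= f x + inner n (g x) d + L / 2 * inner n d d.
Proof.
  set (P t := t * inner n (g x) d + L / 2 * (t * t) * inner n d d).
  set (phi t := H t - P t).
  set (df t := inner n (g (z t)) d - (inner n (g x) d + L * t * inner n d d)).
  destruct (MVT_gen phi 0 1 df) as [c [Hc He]].
  - rewrite Rmin_left, Rmax_right by lra. intros t Ht.
    apply is_derive_Reals. unfold df.
    apply (derivable_pt_lim_minus H P).
    + apply H_der; auto.
    + apply is_derive_Reals. unfold P. auto_derive; auto. rewrite !Rmult_1_l, !Rmult_1_r. field.
  - rewrite Rmin_left, Rmax_right by lra. intros t Ht.
    apply continuity_pt_minus; [apply H_cont; auto|]. unfold P. reg.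
  - rewrite Rmin_left, Rmax_right in Hc by lra.
    assert (Hdf : df c <= 0).
    { unfold df.
      assert (Hzc : X (z c)) by (apply Xz; auto).
      pose proof (CS n (vsub (g (z c)) (g x)) d) as Hcs.
      rewrite inner_sub_l in Hcs.
      pose proof (hLip _ _ Hzc hx) as Hl. rewrite zx, norm_scal, Rabs_pos_eq in Hl by lra.
      pose proof (norm_ge0 n d). pose proof (norm_sq n d).
      assert (norm n (vsub (g (z c)) (g x)) * norm n d <= L * (c * norm n d) * norm n d)
        by (apply Rmult_le_compat_r; auto).
      nra. }
    unfold phi, H, P in He. rewrite (cl_id 1), (cl_id 0), z1, z0 in He by lra.
    nra.
Qed.
End Desc.

Lemma arch_nat r : exists k : nat, r < INR k.
Proof.
  destruct (archimed r) as [H _]. exists (Z.abs_nat (up r)).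
  rewrite INR_IZR_INZ, Nat2Z.inj_abs_nat, abs_IZR.
  pose proof (Rle_abs (IZR (up r))). lra.
Qed.

Lemma inv_small eps : eps > 0 -> exists K, forall k, (k >= K)%nat -> / (INR k + 1) < eps.
Proof.
  intros He. destruct (arch_nat (/ eps)) as [K HK]. exists K. intros k Hk.
  apply le_INR in Hk. pose proof (pos_INR k).
  assert (/ eps < INR k + 1) by lra.
  rewrite <- (Rinv_inv eps). apply Rinv_lt_contravar; [|auto].
  apply Rmult_lt_0_compat; [apply Rinv_0_lt_compat|]; lra.
Qed.

Lemma coord_le n x i : (i < n)%nat -> x i * x i <= inner n x x.
Proof.
  unfold inner. induction n; intros Hi; [lia|]. simpl.
  pose proof (sumR_nonneg n (fun i => x i * x i) ltac:(intros; nra)).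
  destruct (Nat.eq_dec i n) as [->|Hne]; [lra|].
  specialize (IHn ltac:(lia)). nra.
Qed.

Lemma sum_cv m (p : vec) (ys : nat -> vec) :
  (forall i, (i < m)%nat -> Un_cv (fun k => ys k i) (p i)) ->
  forall eps, eps > 0 -> exists K, forall k, (k >= K)%nat ->
    inner m (vsub p (ys k)) (vsub p (ys k)) < eps.
Proof.
  induction m; intros Hcv eps He.
  - exists 0%nat. intros. unfold inner; simpl; lra.
  - destruct (IHm (fun i Hi => Hcv i ltac:(lia)) (eps / 2) ltac:(lra)) as [K1 H1].
    destruct (Hcv m ltac:(lia) (sqrt (eps / 2))) as [K2 H2].
    { apply sqrt_lt_R0; lra. }
    exists (Nat.max K1 K2). intros k Hk.
    specialize (H1 k ltac:(lia)). specialize (H2 k ltac:(lia)).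
    unfold inner in *; simpl. unfold Rdist in H2.
    unfold vsub at 3 4.
    assert (Hsq : (p m - ys k m) * (p m - ys k m) < eps / 2).
    { replace (p m - ys k m) with (- (ys k m - p m)) by ring.
      rewrite <- (sqrt_sqrt (eps/2)) by lra.
      pose proof (Rabs_pos (ys k m - p m)).
      assert (Rabs (ys k m - p m) * Rabs (ys k m - p m) < sqrt (eps/2) * sqrt (eps/2)) by nra.
      rewrite <- Rabs_mult in H0. pose proof (Rle_abs ((ys k m - p m) * (ys k m - p m))). nra. }
    lra.
Qed.

Lemma para n u a b : inner n (vsub a b) (vsub a b) = 2*inner n (vsub u a) (vsub u a) + 2*inner n (vsub u b) (vsub u b) - 4*inner n (vsub u (vadd (vscal (1/2) a) (vscal (1-1/2) b))) (vsub u (vadd (vscal (1/2) a) (vscal (1-1/2) b))).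
Proof. unfold inner, vsub, vadd, vscal; induction n; simpl; [ring| rewrite IHn; field]. Qed.

Lemma sq_lt a b : 0 <= a -> a < b -> a * a < b * b.
Proof. intros; nra. Qed.

Section Proj.
Variables (n : nat) (S : vec -> Prop) (u : vec).
Hypotheses (hsub : subset_Rn n S) (hcl : closed_in_Rn n S) (hcv : convex_in_Rn S)
  (hne : exists y, S y).

Lemma glb_dist : exists d, 0 <= d /\ (forall y, S y -> d <= norm n (vsub u y)) /\
  (forall eps, eps > 0 -> exists y, S y /\ norm n (vsub u y) < d + eps).
Proof.
  set (E r := exists y, S y /\ r = - norm n (vsub u y)).
  assert (Hb : bound E).
  { exists 0. intros r [y [_ ->]]. pose proof (norm_ge0 n (vsub u y)). lra. }
  assert (Hn : exists r, E r).
  { destruct hne as [y Hy]. exists (- norm n (vsub u y)). exists y; auto. }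
  destruct (completeness E Hb Hn) as [m [Hub Hl]].
  exists (- m). split; [|split].
  - assert (m <= 0).
    { apply Hl. intros r [y [_ ->]]. pose proof (norm_ge0 n (vsub u y)). lra. }
    lra.
  - intros y Hy. assert (E (- norm n (vsub u y))) by (exists y; auto).
    specialize (Hub _ H). lra.
  - intros eps He. apply NNPP. intros Hno.
    assert (m <= m - eps).
    { apply Hl. intros r [y [Hy ->]].
      destruct (Rle_dec (- norm n (vsub u y)) (m - eps)); auto.
      exfalso. apply Hno. exists y. split; auto. lra. }
    lra.
Qed.

Lemma proj_exists : exists p, is_proj n S u p.
Proof.
  destruct glb_dist as [d [Hd0 [Hlow Happ]]].
  assert (Hex : forall k:nat, exists y, S y /\ norm n (vsub u y) < d + / (INR k + 1)).
  { intro k; apply Happ. apply Rinv_0_lt_compat. pose proof (pos_INR k); lra. }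
  set (ys k := proj1_sig (constructive_indefinite_description _ (Hex k))).
  assert (Hys : forall k, S (ys k) /\ norm n (vsub u (ys k)) < d + / (INR k + 1)).
  { intro k; unfold ys; destruct constructive_indefinite_description; auto. }
  assert (Hek : forall k, 0 < / (INR k + 1) <= 1).
  { intro k. pose proof (pos_INR k). split; [apply Rinv_0_lt_compat; lra|].
    rewrite <- Rinv_1. apply Rinv_le_contravar; lra. }
  assert (Hpar : forall k m, inner n (vsub (ys k) (ys m)) (vsub (ys k) (ys m)) <=
     2*((d + /(INR k+1))*(d + /(INR k+1))) + 2*((d+/(INR m+1))*(d+/(INR m+1))) - 4 * (d*d)).
  { intros k m. destruct (Hys k) as [Sk Nk]; destruct (Hys m) as [Sm Nm].
    assert (Smid : S (vadd (vscal (1/2) (ys k)) (vscal (1 - 1/2) (ys m)))) by (apply hcv; auto; lra).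
    pose proof (Hlow _ Smid) as Hmid.
    rewrite (para n u).
    apply sq_lt in Nk; [|apply norm_ge0]. apply sq_lt in Nm; [|apply norm_ge0].
    assert (d * d <= norm n (vsub u (vadd (vscal (1 / 2) (ys k)) (vscal (1 - 1 / 2) (ys m)))) *
       norm n (vsub u (vadd (vscal (1 / 2) (ys k)) (vscal (1 - 1 / 2) (ys m))))) by nra.
    rewrite <- !norm_sq. simpl. nra. }
  assert (Hcau : forall i, Cauchy_crit (fun k => ys k i)).
  { intros i eps He. destruct (lt_dec i n) as [Hi|Hi].
    - assert (Hc : 0 < eps * eps / (8 * d + 4)) by (apply Rdiv_lt_0_compat; nra).
      destruct (inv_small _ Hc) as [K HK]. exists K. intros k m Hk Hm.
      specialize (HK k Hk) as Hk'. specialize (HK m Hm) as Hm'.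
      pose proof (Hek k). pose proof (Hek m).
      pose proof (Hpar k m) as Hp. pose proof (coord_le n (vsub (ys k) (ys m)) i Hi) as Hc2.
      unfold vsub at 1 2 in Hc2.
      set (a := / (INR k + 1)) in *. set (b := / (INR m + 1)) in *.
      assert (Hab : 2 * ((d + a) * (d + a)) + 2 * ((d + b) * (d + b)) - 4 * (d * d) < (8*d+4) * (eps * eps / (8 * d + 4))) by nra.
      replace ((8*d+4) * (eps * eps / (8 * d + 4))) with (eps * eps) in Hab by (field; lra).
      assert (Hx : (ys k i - ys m i) * (ys k i - ys m i) < eps * eps) by lra.
      unfold Rdist. unfold Rabs; destruct Rcase_abs; nra.
    - exists 0%nat. intros k m _ _. unfold Rdist.
      rewrite (hsub _ (proj1 (Hys k)) i ltac:(lia)), (hsub _ (proj1 (Hys m)) i ltac:(lia)).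
      rewrite Rminus_0_r, Rabs_R0. lra. }
  set (p i := proj1_sig (R_complete _ (Hcau i))).
  assert (Hp : forall i, Un_cv (fun k => ys k i) (p i)).
  { intro i; unfold p; destruct R_complete; auto. }
  assert (Hpn : inRn n p).
  { intros i Hi. apply (UL_sequence (fun k => ys k i)); auto.
    intros eps He. exists 0%nat. intros k _. unfold Rdist.
    rewrite (hsub _ (proj1 (Hys k)) i Hi), Rminus_0_r, Rabs_R0. lra. }
  assert (Hsm : forall e, e > 0 -> exists K, forall k, (k >= K)%nat -> norm n (vsub p (ys k)) < e).
  { intros e He. destruct (sum_cv n p ys (fun i _ => Hp i) (e * e) ltac:(nra)) as [K HK].
    exists K. intros k Hk. specialize (HK k Hk).
    pose proof (norm_sq n (vsub p (ys k))). pose proof (norm_ge0 n (vsub p (ys k))).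
    nra. }
  assert (Sp : S p).
  { apply hcl; auto. intros eps He. destruct (Hsm eps He) as [K HK].
    exists (ys K). split; [apply Hys|apply HK; lia]. }
  exists p. split; auto. intros y Sy.
  apply Rle_trans with d; [|apply Hlow; auto].
  apply Rnot_lt_le. intros Hgt.
  set (e := (norm n (vsub u p) - d) / 2).
  destruct (inv_small e ltac:(unfold e; lra)) as [K1 H1].
  destruct (Hsm e ltac:(unfold e; lra)) as [K2 H2].
  set (k := Nat.max K1 K2).
  specialize (H1 k ltac:(lia)). specialize (H2 k ltac:(lia)).
  pose proof (norm_tri3 n u (ys k) p). rewrite (norm_sym n (ys k) p) in H.
  pose proof (proj2 (Hys k)). unfold e in *. lra.
Qed.
End Proj.

Theorem theorem5 (n : nat) (X : vec -> Prop) (f : vec -> R) (g : vec -> vec)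
  (Lf fstar beta : R)
  (hXsub : subset_Rn n X) (hXne : exists x, X x)
  (hXcl : closed_in_Rn n X) (hXcv : convex_in_Rn X)
  (hfcv : convex_on X f)
  (hgrad : is_gradient_on n X f g)
  (hL : Lf > 0) (hLip : lipschitz_on n X g Lf)
  (hfstar_lb : forall x, X x -> fstar <= f x)
  (hXstar_ne : exists x, optset X f fstar x)
  (hXstar_cl : closed_in_Rn n (optset X f fstar))
  (hbeta : 0 < beta < 1)
  (hEB : forall x xp xb xpb, X x ->
      is_proj n X (vsub x (vscal (/ Lf) (g x))) xp ->
      is_proj n (optset X f fstar) x xb ->
      is_proj n (optset X f fstar) xp xpb ->
      norm n (vsub xp xpb) <= beta * norm n (vsub x xb)) :
  forall x xb, X x -> is_proj n (optset X f fstar) x xb ->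
    f x - fstar >= (Lf * (1 - beta) ^ 2) / 2 * (norm n (vsub x xb)) ^ 2.
Proof.
  intros x xb Hx Hxb.
  assert (Hsub2 : subset_Rn n (optset X f fstar)) by (intros y [Hy _]; auto).
  assert (Hcv2 : convex_in_Rn (optset X f fstar)).
  { intros a b t [Ha Fa] [Hb Fb] Ht. split; [apply hXcv; auto|].
    pose proof (hfcv a b t Ha Hb Ht). pose proof (hfstar_lb _ (hXcv a b t Ha Hb Ht)).
    rewrite Fa, Fb in H. nra. }
  set (u := vsub x (vscal (/ Lf) (g x))).
  destruct (proj_exists n X u hXsub hXcl hXcv hXne) as [xp Hxp].
  destruct (proj_exists n (optset X f fstar) xp Hsub2 hXstar_cl Hcv2 hXstar_ne) as [xpb Hxpb].
  pose proof (hEB x xp xb xpb Hx Hxp Hxb Hxpb) as Heb.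
  destruct Hxp as [Xp Hxpm]. destruct Hxpb as [Spb _]. destruct Hxb as [_ Hxbm].
  pose proof (Hxbm _ Spb) as H1.
  pose proof (norm_tri3 n x xp xpb) as H2.
  pose proof (proj_vi n X u xp x hXcv (conj Xp Hxpm) Hx) as Hvi.
  replace (vsub u xp) with (vsub (vsub x xp) (vscal (/ Lf) (g x))) in Hvi
    by (apply functional_extensionality; intro i; unfold u, vsub, vscal; ring).
  rewrite inner_sub_l, inner_scal_l in Hvi.
  pose proof (descent n X f g Lf x xp hXcv hgrad hLip Hx Xp) as Hd.
  replace (vsub xp x) with (vscal (-1) (vsub x xp)) in Hd
    by (apply functional_extensionality; intro i; unfold vsub, vscal; ring).
  rewrite inner_scal_r, inner_scal_l, inner_scal_r in Hd.
  pose proof (hfstar_lb _ Xp).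
  assert (Hg : Lf * inner n (vsub x xp) (vsub x xp) <= inner n (g x) (vsub x xp)).
  { apply Rmult_le_compat_l with (r := Lf) in Hvi; [|lra].
    replace (Lf * (inner n (vsub x xp) (vsub x xp) - / Lf * inner n (g x) (vsub x xp)))
      with (Lf * inner n (vsub x xp) (vsub x xp) - inner n (g x) (vsub x xp)) in Hvi by (field; lra).
    lra. }
  rewrite <- norm_sq in Hg, Hd.
  pose proof (norm_ge0 n (vsub x xb)). pose proof (norm_ge0 n (vsub x xp)).
  set (a := norm n (vsub x xp)) in *. set (b := norm n (vsub x xb)) in *.
  assert (Hab : (1 - beta) * b <= a) by lra.
  assert (Hab2 : ((1 - beta) * b) ^ 2 <= a ^ 2).
  { apply pow_incr; split; [apply Rmult_le_pos; lra|auto]. }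
  assert (Lf * ((1 - beta) * b) ^ 2 <= Lf * a ^ 2) by (apply Rmult_le_compat_l; lra).
  nra.
Qed.
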